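(* Let $I\subseteq\mathbb{R}[x_1,\dots,x_n]$ be an ideal. Then there exists a function $\Psi:\mathbb N\to\mathbb N$ such that $\mathrm{TH}_{\Psi(k)}(I)\subseteq \mathrm{TH}_k(\sqrt[\mathbb R]{I})$ for all $k\in\mathbb N$.
   Context: $\mathbb{R}[\mathbf x]=\mathbb{R}[x_1,\dots,x_n]$ and $\mathbb{R}[\mathbf x]_k$ denotes the polynomials of degree at most $k$. The real radical of an ideal $I$ is $\sqrt[\mathbb R]{I}=\{f\in\mathbb{R}[\mathbf x]: f^{2m}+\sum_i g_i^2\in I$ for some $m\in\mathbb N$ and $g_i\in\mathbb{R}[\mathbf x]\}$. A polynomial $h$ is $k$-sos modulo an ideal $J$ if there are $g_1,\dots,g_r\in\mathbb{R}[\mathbf x]_k$ with $h-\sum_i g_i^2\in J$. The $k$-th theta body is $\mathrm{TH}_k(J)=\{p\in\mathbb R^n: l(p)\ge 0$ for every $l\in\mathbb{R}[\mathbf x]_1$ that is $k$-sos modulo $J\}$. *)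

(* Defs.v *)
From mathcomp Require Import ssreflect ssrfun ssrbool eqtype ssrnat fintype.
From Stdlib Require Import Reals List.
Open Scope R_scope.

Set Implicit Arguments.
Unset Strict Implicit.

Inductive pexpr (n : nat) : Type :=
  | PConst : R -> pexpr n
  | PVar : 'I_n -> pexpr n
  | PAdd : pexpr n -> pexpr n -> pexpr n
  | PMul : pexpr n -> pexpr n -> pexpr n.

Fixpoint peval (n : nat) (e : pexpr n) (x : 'I_n -> R) : R :=
  match e with
  | PConst c => c
  | PVar i => x i
  | PAdd a b => peval a x + peval b x
  | PMul a b => peval a x * peval b x
  end.

Fixpoint pdeg (n : nat) (e : pexpr n) : nat :=
  match e with
  | PConst _ => 0%nat
  | PVar _ => 1%nat
  | PAdd a b => Nat.max (pdeg a) (pdeg b)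
  | PMul a b => (pdeg a + pdeg b)%nat
  end.

Definition mpoly (n : nat) := ('I_n -> R) -> R.

Definition deg_le (n : nat) (k : nat) (f : mpoly n) : Prop :=
  exists e : pexpr n, (pdeg e <= k)%nat /\ forall x, f x = peval e x.

Definition is_poly (n : nat) (f : mpoly n) : Prop := exists k, deg_le k f.

Definition is_ideal (n : nat) (I : mpoly n -> Prop) : Prop :=
  (forall f, I f -> is_poly f) /\
  I (fun _ => 0) /\
  (forall f g, I f -> I g -> I (fun x => f x + g x)) /\
  (forall f g, is_poly g -> I f -> I (fun x => g x * f x)).

Definition sum_sq (n : nat) (gs : list (mpoly n)) (x : 'I_n -> R) : R :=
  fold_right (fun g acc => (g x)^2 + acc) 0 gs.

Definition real_radical (n : nat) (I : mpoly n -> Prop) (f : mpoly n) : Prop :=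
  is_poly f /\
  exists (m : nat) (gs : list (mpoly n)),
    (forall g, In g gs -> is_poly g) /\
    I (fun x => f x ^ (2 * m) + sum_sq gs x).

Definition k_sos_mod (n : nat) (k : nat) (J : mpoly n -> Prop) (h : mpoly n) : Prop :=
  exists gs : list (mpoly n),
    (forall g, In g gs -> deg_le k g) /\
    J (fun x => h x - sum_sq gs x).

Definition TH (n : nat) (k : nat) (J : mpoly n -> Prop) (p : 'I_n -> R) : Prop :=
  forall l : mpoly n, deg_le 1 l -> k_sos_mod k J l -> 0 <= l p.

(* Main.v *)
Require Import Defs.
From mathcomp Require Import ssreflect ssrfun ssrbool eqtype ssrnat seq fintype zify.
From Stdlib Require Import Reals List Lia Lra ClassicalEpsilon FunctionalExtensionality Classical.
Open Scope R_scope.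
Set Implicit Arguments. Unset Strict Implicit.

Lemma deg_le_mono n k k' (f : mpoly n) : deg_le k f -> (k <= k')%nat -> deg_le k' f.
Proof. move=> [e [He Hf]] Hk. exists e. split => //. lia. Qed.

Lemma deg_ext n a (f g : mpoly n) : (forall x, f x = g x) -> deg_le a f -> deg_le a g.
Proof. move=> H [e [He Hf]]. exists e. split => // x. by rewrite -H. Qed.

Lemma deg_const n (c : R) : deg_le (n:=n) 0 (fun _ => c).
Proof. exists (PConst n c). split => //. Qed.

Lemma deg_add n a b (f g : mpoly n) : deg_le a f -> deg_le b g ->
  deg_le (Nat.max a b) (fun x => f x + g x).
Proof.
move=> [e [He Hf]] [e' [He' Hg]]. exists (PAdd e e'); split.
- simpl. lia.
- move=> x /=. by rewrite Hf Hg.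
Qed.

Lemma deg_mul n a b (f g : mpoly n) : deg_le a f -> deg_le b g ->
  deg_le (a + b) (fun x => f x * g x).
Proof.
move=> [e [He Hf]] [e' [He' Hg]]. exists (PMul e e'); split.
- simpl. lia.
- move=> x /=. by rewrite Hf Hg.
Qed.

Lemma deg_scale n a c (f : mpoly n) : deg_le a f -> deg_le a (fun x => c * f x).
Proof.
move=> [e [He Hf]]. exists (PMul (PConst n c) e); split.
- simpl. lia.
- move=> x /=. by rewrite Hf.
Qed.

Lemma poly_const n c : is_poly (n:=n) (fun _ => c).
Proof. exists 0%nat. apply deg_const. Qed.
Lemma poly_add n (f g : mpoly n) : is_poly f -> is_poly g -> is_poly (fun x => f x + g x).
Proof. move=> [a Ha] [b Hb]. eexists. exact: deg_add Ha Hb. Qed.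
Lemma poly_mul n (f g : mpoly n) : is_poly f -> is_poly g -> is_poly (fun x => f x * g x).
Proof. move=> [a Ha] [b Hb]. eexists. exact: deg_mul Ha Hb. Qed.
Lemma poly_ext n (f g : mpoly n) : (forall x, f x = g x) -> is_poly f -> is_poly g.
Proof. move=> H [a Ha]. exists a. exact: deg_ext H Ha. Qed.
Lemma poly_pow n (f : mpoly n) m : is_poly f -> is_poly (fun x => f x ^ m).
Proof.
move=> Hf. elim: m => [|m IH]. apply: poly_ext (poly_const n 1) => x //.
apply: poly_ext (poly_mul Hf IH) => x //.
Qed.
Lemma poly_neg n (f : mpoly n) : is_poly f -> is_poly (fun x => - f x).
Proof. move=> Hf. apply: poly_ext (poly_mul (poly_const n (-1)) Hf) => x. ring. Qed.

Lemma list_bound n (gs : list (mpoly n)) : (forall g, In g gs -> is_poly g) ->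
  exists D, forall g, In g gs -> deg_le D g.
Proof.
elim: gs => [|g gs IH] H. by exists 0%nat.
have [D HD] := IH (fun g' Hg' => H g' (or_intror Hg')).
have [d Hd] := H g (or_introl erefl).
exists (Nat.max d D) => g' [<-|Hg']; apply: deg_le_mono; eauto; lia.
Qed.

Lemma sum_sq_nil n (x : 'I_n -> R) : sum_sq nil x = 0.
Proof. by []. Qed.
Lemma sum_sq_cons n (g : mpoly n) gs x : sum_sq (g :: gs) x = g x ^ 2 + sum_sq gs x.
Proof. by []. Qed.

Lemma sum_sq_app n (a b : list (mpoly n)) x : sum_sq (a ++ b) x = sum_sq a x + sum_sq b x.
Proof. elim: a => [|g a IH]. rewrite sum_sq_nil /=; ring.
change ((g :: a) ++ b) with (g :: (a ++ b)). rewrite !sum_sq_cons IH. ring. Qed.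

Lemma sum_sq_scalef n (gs : list (mpoly n)) (c : mpoly n) x :
  sum_sq (map (fun g y => c y * g y) gs) x = (c x)^2 * sum_sq gs x.
Proof. elim: gs => [|g gs IH]. rewrite /= ?sum_sq_nil /sum_sq /=; ring. change (map ?F (g :: gs)) with (F g :: map F gs). rewrite !sum_sq_cons IH. ring. Qed.

Lemma sum_sq_scale n (gs : list (mpoly n)) (c : R) x :
  sum_sq (map (fun g y => c * g y) gs) x = c^2 * sum_sq gs x.
Proof. elim: gs => [|g gs IH]. rewrite /= ?sum_sq_nil /sum_sq /=; ring. change (map ?F (g :: gs)) with (F g :: map F gs). rewrite !sum_sq_cons IH. ring. Qed.

Lemma sum_sq_deg n k (gs : list (mpoly n)) : (forall g, In g gs -> deg_le k g) ->
  deg_le (k + k) (sum_sq gs).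
Proof.
elim: gs => [|g gs IH] H.
  apply: deg_le_mono; last by instantiate (1 := 0%nat); lia.
  apply: deg_ext (deg_const n 0) => x //.
have := deg_add (deg_mul (H g (or_introl erefl)) (H g (or_introl erefl)))
  (IH (fun g' Hg' => H g' (or_intror Hg'))).
move=> Hd. apply: deg_le_mono; last by instantiate (1 := Nat.max (k+k) (k+k)); lia.
apply: deg_ext Hd => x. rewrite sum_sq_cons. ring.
Qed.

Lemma I_ext n (I : mpoly n -> Prop) (f g : mpoly n) : (forall x, f x = g x) -> I f -> I g.
Proof. move=> H. have -> : g = f by apply: functional_extensionality => x; rewrite H. done. Qed.

Lemma I_add n (I : mpoly n -> Prop) (hI : is_ideal I) f g : I f -> I g -> I (fun x => f x + g x).
Proof. case: hI => [_ [_ [H _]]]. exact: H. Qed.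
Lemma I_mul n (I : mpoly n -> Prop) (hI : is_ideal I) f g : is_poly g -> I f -> I (fun x => g x * f x).
Proof. case: hI => [_ [_ [_ H]]]. exact: H. Qed.
Lemma I_zero n (I : mpoly n -> Prop) (hI : is_ideal I) : I (fun _ => 0).
Proof. by case: hI => [_ [H _]]. Qed.
Lemma I_scale n (I : mpoly n -> Prop) (hI : is_ideal I) f c : I f -> I (fun x => c * f x).
Proof. move=> Hf. exact: (I_mul hI (poly_const n c) Hf). Qed.

Definition Sc n (I : mpoly n -> Prop) (D : nat) (h : mpoly n) : Prop :=
  forall eps, 0 < eps -> exists gs : list (mpoly n),
    (forall g, In g gs -> deg_le D g) /\ I (fun x => eps - h x - sum_sq gs x).

Definition Q n (I : mpoly n -> Prop) (D : nat) (h : mpoly n) : Prop :=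
  Sc I D h /\ Sc I D (fun x => - h x).

Lemma Sc_mono n (I : mpoly n -> Prop) D D' h : Sc I D h -> (D <= D')%nat -> Sc I D' h.
Proof.
move=> H HD eps He. have [gs [H1 H2]] := H eps He. exists gs; split => // g Hg.
exact: deg_le_mono (H1 g Hg) HD.
Qed.

Lemma Sc_ext n (I : mpoly n -> Prop) D (h h' : mpoly n) : (forall x, h x = h' x) -> Sc I D h -> Sc I D h'.
Proof. move=> H. have -> : h' = h by apply: functional_extensionality => x; rewrite H. done. Qed.

Lemma Sc_zero n (I : mpoly n -> Prop) (hI : is_ideal I) D : Sc I D (fun _ => 0).
Proof.
move=> eps He. exists ((fun _ => sqrt eps) :: nil). split.
- move=> g [<-|[]]. apply: deg_le_mono (deg_const n _) _. lia.
- apply: I_ext (I_zero hI) => x. rewrite sum_sq_cons sum_sq_nil pow2_sqrt; lra.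
Qed.

Lemma Sc_add n (I : mpoly n -> Prop) (hI : is_ideal I) D h1 h2 :
  Sc I D h1 -> Sc I D h2 -> Sc I D (fun x => h1 x + h2 x).
Proof.
move=> H1 H2 eps He.
have [g1 [D1 I1]] := H1 (eps/2) ltac:(lra).
have [g2 [D2 I2]] := H2 (eps/2) ltac:(lra).
exists (g1 ++ g2). split.
- move=> g Hg; case: (in_app_or _ _ _ Hg); auto.
- apply: I_ext (I_add hI I1 I2) => x. rewrite sum_sq_app. lra.
Qed.

Lemma Sc_scale n (I : mpoly n -> Prop) (hI : is_ideal I) D h c :
  0 <= c -> Sc I D h -> Sc I D (fun x => c * h x).
Proof.
move=> Hc H. case: (Rle_lt_or_eq_dec _ _ Hc) => Hc'; last first.
  apply: Sc_ext (Sc_zero hI D) => x. rewrite -Hc'. ring.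
move=> eps He. have [gs [Hd HI]] := H (eps / c) ltac:(apply: Rdiv_lt_0_compat; lra).
exists (map (fun g y => sqrt c * g y) gs). split.
- move=> g /in_map_iff [g0 [<- Hg0]]. exact: deg_scale (Hd g0 Hg0).
- apply: I_ext (@I_scale _ _ hI _ c HI) => x. rewrite sum_sq_scale pow2_sqrt //. field. lra.
Qed.

Lemma Q_mono n (I : mpoly n -> Prop) D D' h : Q I D h -> (D <= D')%nat -> Q I D' h.
Proof. move=> [H1 H2] HD. split; exact: Sc_mono HD. Qed.

Lemma Q_ext n (I : mpoly n -> Prop) D (h h' : mpoly n) : (forall x, h x = h' x) -> Q I D h -> Q I D h'.
Proof. move=> H. have -> : h' = h by apply: functional_extensionality => x; rewrite H. done. Qed.

Lemma Q_lin n (I : mpoly n -> Prop) (hI : is_ideal I) D f g a :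
  Q I D f -> Q I D g -> Q I D (fun x => f x - a * g x).
Proof.
move=> [Hf Hf'] [Hg Hg']. case: (Rle_lt_dec a 0) => Ha; split.
- apply: Sc_ext (Sc_add hI Hf (Sc_scale hI (c := -a) ltac:(lra) Hg)) => x. ring.
- apply: Sc_ext (Sc_add hI Hf' (Sc_scale hI (c := -a) ltac:(lra) Hg')) => x. ring.
- apply: Sc_ext (Sc_add hI Hf (Sc_scale hI (c := a) ltac:(lra) Hg')) => x. ring.
- apply: Sc_ext (Sc_add hI Hf' (Sc_scale hI (c := a) ltac:(lra) Hg)) => x. ring.
Qed.

Lemma Q_zero n (I : mpoly n -> Prop) (hI : is_ideal I) D : Q I D (fun _ => 0).
Proof. split; last apply: Sc_ext (Sc_zero hI D) => x; [exact: Sc_zero|ring]. Qed.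

Lemma pow2N (a : R) N : a ^ (2 * N)%nat = (a ^ 2) ^ N.
Proof. rewrite -pow_mult; f_equal; try lia. Qed.

Lemma Pj n (I : mpoly n -> Prop) (hI : is_ideal I) j : forall (y : mpoly n) s,
  is_poly y -> (forall g, In g s -> is_poly g) ->
  I (fun x => y x ^ (2 ^ j)%nat + sum_sq s x) -> exists D, Sc I D y.
Proof.
elim: j => [|j IH] y s Hy Hs HI.
- have [D HD] := list_bound Hs. exists D => eps He.
  exists ((fun _ => sqrt eps) :: s). split.
  + move=> g [<-|Hg]; last exact: HD. apply: deg_le_mono (deg_const n _) _. lia.
  + apply: I_ext (@I_scale _ _ hI _ (-1) HI) => x.
    rewrite sum_sq_cons pow2_sqrt; last lra. have -> : (2 ^ 0)%nat = 1%nat by []. rewrite pow_1. ring.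
- have Hy2 : is_poly (fun x => y x ^ 2) by exact: poly_pow.
  have HI2 : I (fun x => (y x ^ 2) ^ (2 ^ j)%nat + sum_sq s x).
    apply: I_ext HI => x. by rewrite Nat.pow_succ_r' pow2N.
  have [D1 HD1] := IH _ s Hy2 Hs HI2.
  have [d Hd] := Hy.
  exists (Nat.max d D1) => eps He.
  have [gs [Hgs HIg]] := HD1 (eps ^ 2) ltac:(apply: pow_lt; lra).
  set r := sqrt (2 * eps).
  have Hr : r * r = 2 * eps by rewrite /r sqrt_sqrt; lra.
  have Hr0 : 0 < r by rewrite /r; apply: sqrt_lt_R0; lra.
  exists ((fun x => / r * (y x + - eps)) :: map (fun g x => / r * g x) gs). split.
  + move=> g [<-|/in_map_iff [g0 [<- Hg0]]].
    * apply: deg_scale. apply: deg_le_mono (deg_add Hd (deg_const n (- eps))) _. lia.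
    * apply: deg_scale. apply: deg_le_mono (Hgs g0 Hg0) _. lia.
  + apply: I_ext (@I_scale _ _ hI _ (/ (2 * eps)) HIg) => x.
    rewrite sum_sq_cons sum_sq_scale. clearbody r. have Heps : eps = r * r / 2 by lra. subst eps. field. lra.
Qed.

Lemma pow_sq_r (a : R) r : (a ^ r) ^ 2 = a ^ (2 * r)%nat.
Proof. rewrite -pow_mult; f_equal; try lia. Qed.

Lemma lift n (I : mpoly n -> Prop) (hI : is_ideal I) (f : mpoly n) m s :
  is_poly f -> (forall g, In g s -> is_poly g) ->
  I (fun x => f x ^ (2 * m)%nat + sum_sq s x) ->
  exists s', (forall g, In g s' -> is_poly g) /\
    I (fun x => f x ^ (2 ^ m.+1)%nat + sum_sq s' x).
Proof.
move=> Hf Hs HI. set r := (2 ^ m - m)%nat.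
have Hm : (m < 2 ^ m)%nat by apply/ltP; apply: Nat.pow_gt_lin_r; lia.
have E : (2 ^ m.+1 = 2 * r + 2 * m)%nat by rewrite Nat.pow_succ_r' /r; lia.
exists (map (fun g x => f x ^ r * g x) s). split.
- move=> g /in_map_iff [g0 [<- Hg0]]. exact: poly_mul (poly_pow r Hf) (Hs g0 Hg0).
- apply: I_ext (I_mul hI (poly_pow (2 * r)%nat Hf) HI) => x.
  rewrite sum_sq_scalef E. have -> : f x ^ (2 * r + 2 * m)%nat = f x ^ (2 * r)%nat * f x ^ (2 * m)%nat by rewrite -pow_add. rewrite -!pow_sq_r. ring.
Qed.

Lemma rad_Q n (I : mpoly n -> Prop) (hI : is_ideal I) h : real_radical I h -> exists D, Q I D h.
Proof.
move=> [Hh [m [s [Hs HI]]]].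
have [s' [Hs' HI']] := lift hI Hh Hs HI.
have [D1 H1] := Pj hI Hh Hs' HI'.
have HI'' : I (fun x => (- h x) ^ (2 ^ m.+1)%nat + sum_sq s' x).
  apply: I_ext HI' => x. rewrite Nat.pow_succ_r' !pow2N. f_equal. f_equal. ring.
have [D2 H2] := Pj hI (poly_neg Hh) Hs' HI''.
exists (Nat.max D1 D2). split; [apply: Sc_mono H1 _ | apply: Sc_mono H2 _]; lia.
Qed.

Fixpoint comb n (L : list (mpoly n)) (c : nat -> R) : mpoly n :=
  match L with
  | nil => fun _ => 0
  | v :: L' => fun x => c 0%nat * v x + comb L' (fun i => c (S i)) x
  end.

Definition inspan n (L : list (mpoly n)) (f : mpoly n) := exists c, forall x, f x = comb L c x.

Lemma comb_lin n (L : list (mpoly n)) : forall c1 c2 a x,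
  comb L (fun i => c1 i - a * c2 i) x = comb L c1 x - a * comb L c2 x.
Proof. elim: L => [|v L IH] c1 c2 a x /=. ring. rewrite IH. ring. Qed.

Lemma comb_zero n (L : list (mpoly n)) x : comb L (fun _ => 0) x = 0.
Proof. elim: L => [|v L IH] /=. done. rewrite IH. ring. Qed.

Lemma span_ext n (L : list (mpoly n)) f g : (forall x, f x = g x) -> inspan L f -> inspan L g.
Proof. move=> H [c Hc]. exists c => x. by rewrite -H. Qed.

Lemma span_lin n (L : list (mpoly n)) f g a : inspan L f -> inspan L g -> inspan L (fun x => f x - a * g x).
Proof. move=> [c1 H1] [c2 H2]. exists (fun i => c1 i - a * c2 i) => x. by rewrite comb_lin H1 H2. Qed.

Lemma span_zero n (L : list (mpoly n)) : inspan L (fun _ => 0).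
Proof. exists (fun _ => 0) => x. by rewrite comb_zero. Qed.

Lemma span_add n (L : list (mpoly n)) f g : inspan L f -> inspan L g -> inspan L (fun x => f x + g x).
Proof.
move=> Hf Hg. apply: span_ext (span_lin (-1) Hf Hg) => x. ring.
Qed.

Lemma span_scale n (L : list (mpoly n)) f a : inspan L f -> inspan L (fun x => a * f x).
Proof.
move=> Hf. apply: span_ext (span_lin (- a) (span_zero L) Hf) => x. ring.
Qed.

Lemma span_in n (L : list (mpoly n)) v : In v L -> inspan L v.
Proof.
elim: L => [|w L IH] //= [<-|Hv].
- exists (fun i => match i with 0%nat => 1 | S _ => 0 end) => x /=. rewrite comb_zero. ring.
- have [c Hc] := IH Hv. exists (fun i => match i with 0%nat => 0 | S i => c i end) => x /=.
  rewrite Hc Rmult_0_l Rplus_0_l. reflexivity.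
Qed.

Lemma span_mul n (L M : list (mpoly n)) (g : mpoly n) : forall f, inspan L f ->
  (forall v, In v L -> inspan M (fun x => v x * g x)) -> inspan M (fun x => f x * g x).
Proof.
elim: L => [|v L IH] f [c Hc] H.
- apply: span_ext (span_zero M) => x. rewrite Hc /=. ring.
- have H1 : inspan M (fun x => comb L (fun i => c (S i)) x * g x).
    apply: IH; first by exists (fun i => c (S i)).
    move=> w Hw. apply: H. by right.
  have H2 := span_scale (c 0%nat) (H v (or_introl erefl)).
  apply: span_ext (span_add H2 H1) => x. rewrite Hc /=. ring.
Qed.

Lemma span_sub n (L M : list (mpoly n)) : forall f, inspan L f ->
  (forall v, In v L -> inspan M v) -> inspan M f.
Proof.
move=> f Hf H. have := @span_mul n L M (fun _ => 1) f Hf.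
move=> H'. apply: span_ext (H' _) => [x|v Hv]; first ring.
apply: span_ext (H v Hv) => x. ring.
Qed.

Lemma mem_In (T : eqType) (x : T) (s : list T) : x \in s -> In x s.
Proof.
elim: s => [|y s IH] //. rewrite seq.in_cons => /orP [/eqP ->|H]; [left|right; exact: IH] => //.
Qed.

Lemma In_enum n (i : 'I_n) : In i (enum 'I_n).
Proof. apply: mem_In. by rewrite mem_enum. Qed.

Fixpoint words n (d : nat) : list (list 'I_n) :=
  match d with
  | 0%nat => nil :: nil
  | S d' => nil :: flat_map (fun i => map (cons i) (words n d')) (enum 'I_n)
  end.

Lemma words_len n d : forall u : list 'I_n, In u (words n d) <-> (length u <= d)%coq_nat.
Proof.
elim: d => [|d IH] u /=.
- split. move=> [<-|[]] /=; lia. case: u => [|i u] /=; [left|lia] => //.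
- split.
  + move=> [<-|/in_flat_map [i [_ /in_map_iff [u' [<- Hu']]]]] /=. lia.
    move/IH: Hu'. lia.
  + case: u => [|i u] /=; [by left|] => Hl. right. apply/in_flat_map.
    exists i. split; first exact: In_enum. apply/in_map_iff. exists u. split => //.
    apply/IH. lia.
Qed.

Definition mono n (u : list 'I_n) : mpoly n := fun x => fold_right (fun i acc => x i * acc) 1 u.

Lemma mono_app n (u v : list 'I_n) x : mono (u ++ v) x = mono u x * mono v x.
Proof. elim: u => [|i u IH] /=. rewrite /mono /=. ring. rewrite /mono /= -/(mono _ _) IH /mono. ring. Qed.

Definition Mons n d : list (mpoly n) := map (@mono n) (words n d).

Lemma In_Mons n d v : In v (Mons n d) <-> exists u, v = mono u /\ (length u <= d)%coq_nat.
Proof.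
rewrite /Mons in_map_iff. split.
- move=> [u [<- Hu]]. exists u. split => //. exact/words_len.
- move=> [u [-> Hu]]. exists u. split => //. exact/words_len.
Qed.

Lemma mons_mul n a b (f g : mpoly n) : inspan (Mons n a) f -> inspan (Mons n b) g ->
  inspan (Mons n (a + b)) (fun x => f x * g x).
Proof.
move=> Hf Hg. apply: span_mul Hf _ => v /In_Mons [u [-> Hu]].
apply: span_ext (span_mul (g := mono u) Hg _) => [x|w /In_Mons [u' [-> Hu']]]; first ring.
apply: span_ext (span_in _) => [x|]; first by rewrite -mono_app.
apply/In_Mons. exists (u' ++ u). split => //. rewrite length_app. lia.
Qed.

Lemma mons_mono n a d f : (a <= d)%coq_nat -> inspan (Mons n a) f -> inspan (Mons n d) f.
Proof.
move=> Had Hf. apply: span_sub Hf _ => v /In_Mons [u [-> Hu]]. apply: span_in.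
apply/In_Mons. exists u. split => //. lia.
Qed.

Lemma peval_span n (e : pexpr n) : forall d, (pdeg e <= d)%coq_nat -> inspan (Mons n d) (peval e).
Proof.
elim: e => [c|i|e1 IH1 e2 IH2|e1 IH1 e2 IH2] d /= Hd.
- have H : inspan (Mons n d) (mono nil) by apply: span_in; apply/In_Mons; exists nil; split => //=; lia.
  apply: span_ext (span_scale c H) => x. rewrite /mono /=. ring.
- have H : inspan (Mons n d) (mono (i :: nil)) by apply: span_in; apply/In_Mons; exists (i :: nil); split => //=; lia.
  apply: span_ext H => x. rewrite /mono /=. ring.
- apply: span_add; [apply: IH1 | apply: IH2]; lia.
- apply: mons_mono (mons_mul (IH1 _ (le_n _)) (IH2 _ (le_n _))). lia.
Qed.

Lemma deg_span n D (f : mpoly n) : deg_le D f -> inspan (Mons n D) f.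
Proof.
move=> [e [He Hf]]. apply: span_ext (peval_span (d := D) _) => [x|]; first by rewrite Hf.
apply/leP. exact: He.
Qed.

Lemma fin_sub n (L : list (mpoly n)) : forall (Wp : mpoly n -> Prop),
  (forall f, Wp f -> inspan L f) ->
  (forall f g a, Wp f -> Wp g -> Wp (fun x => f x - a * g x)) ->
  exists B, (forall b, In b B -> Wp b) /\ (forall f, Wp f -> inspan B f).
Proof.
elim: L => [|v L IH] Wp Hsp Hcl.
- exists nil. split; first by []. move=> f Hf. have [c Hc] := Hsp f Hf. by exists c.
- case: (classic (exists w0 c0, Wp w0 /\ (forall x, w0 x = comb (v :: L) c0 x) /\ c0 0%nat <> 0)).
  + move=> [w0 [c0 [Hw0 [Hc0 Hnz]]]].
    have [B [HB1 HB2]] := IH (fun w => Wp w /\ inspan L w) (fun f Hf => proj2 Hf)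
      (fun f g a Hf Hg => conj (Hcl f g a (proj1 Hf) (proj1 Hg)) (span_lin a (proj2 Hf) (proj2 Hg))).
    exists (w0 :: B). split.
    * move=> b [<-|Hb] //. exact: (proj1 (HB1 b Hb)).
    * move=> f Hf. have [c Hc] := Hsp f Hf.
      set a := c 0%nat / c0 0%nat.
      have Hw' := Hcl f w0 a Hf Hw0.
      have Hs' : inspan L (fun x => f x - a * w0 x).
        exists (fun i => c (S i) - a * c0 (S i)) => x.
        rewrite comb_lin Hc Hc0 /= /a. field. exact: Hnz.
      have [d Hd] := HB2 _ (conj Hw' Hs').
      exists (fun i => match i with 0%nat => a | S i => d i end) => x /=.
      have := Hd x. move=> Hdx. rewrite -[comb B (fun i => d i) x]/(comb B d x) -Hdx. ring.
  + move=> Hno. apply: IH => // f Hf. have [c Hc] := Hsp f Hf.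
    have H0 : c 0%nat = 0.
      apply: NNPP => Hne. apply: Hno. exists f, c. auto.
    exists (fun i => c (S i)) => x. rewrite Hc /= H0. ring.
Qed.

Theorem mainTheorem6 (n : nat) (I : mpoly n -> Prop) (hI : is_ideal I) :
  exists Psi : nat -> nat,
    forall (k : nat) (p : 'I_n -> R), TH (Psi k) I p -> TH k (real_radical I) p.
Proof.
have hk : forall k, exists D, forall h, deg_le (2 * k + 1)%nat h -> real_radical I h -> Q I D h.
{ move=> k.
  set Wp := fun h => deg_le (2 * k + 1)%nat h /\ exists D, Q I D h.
  have Hcl : forall f g a, Wp f -> Wp g -> Wp (fun x => f x - a * g x).
    move=> f g a [Hf [D1 Q1]] [Hg [D2 Q2]]. split.
    + apply: deg_le_mono (deg_ext _ (deg_add Hf (deg_scale (- a) Hg))) _; [move=> x; ring | lia].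
    + exists (Nat.max D1 D2). apply: (Q_lin hI); [apply: Q_mono Q1 _ | apply: Q_mono Q2 _]; lia.
  have [B [HB1 HB2]] := @fin_sub n (Mons n (2 * k + 1)%nat) Wp
     (fun f Hf => deg_span (proj1 Hf)) Hcl.
  have [D HD] : exists D, forall b, In b B -> Q I D b.
    clear HB2. elim: B HB1 => [|b B IHB] HB1; first by exists 0%nat.
    have [D1 HD1] := IHB (fun b' Hb' => HB1 b' (or_intror Hb')).
    have [_ [D2 HD2]] := HB1 b (or_introl erefl).
    exists (Nat.max D1 D2) => b' [<-|Hb']; [apply: Q_mono HD2 _ | apply: Q_mono (HD1 b' Hb') _]; lia.
  exists D => h Hd Hr. have [c Hc] := HB2 h (conj Hd (rad_Q hI Hr)).
  apply: Q_ext (fun x => esym (Hc x)) _. clear Hc.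
  elim: B HD {HB1 HB2} c => [|b B IHB] HD c /=; first exact: Q_zero.
  have H1 := IHB (fun b' Hb' => HD b' (or_intror Hb')) (fun i => c (S i)).
  apply: Q_ext (Q_lin hI (- c 0%nat) H1 (HD b (or_introl erefl))) => x. ring.
}
pose Psi k := proj1_sig (constructive_indefinite_description _ (hk k)).
have HPsi : forall k h, deg_le (2 * k + 1)%nat h -> real_radical I h -> Q I (Psi k) h.
  move=> k. exact: proj2_sig (constructive_indefinite_description _ (hk k)).
exists (fun k => Nat.max k (Psi k)).
move=> k p Hp l Hl [gs [Hgs HJ]].
have Hdh : deg_le (2 * k + 1)%nat (fun x => l x - sum_sq gs x).
  apply: deg_le_mono (deg_ext _ (deg_add Hl (deg_scale (-1) (sum_sq_deg Hgs)))) _;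
    [move=> x; ring | lia].
have [_ HQ] := HPsi k _ Hdh HJ.
apply: Rnot_lt_le => Hneg.
have [gs' [Hgs' HI']] := HQ (- l p / 2) ltac:(lra).
have H1 : deg_le 1 (fun x => l x + - l p / 2).
  apply: deg_le_mono (deg_add Hl (deg_const n _)) _. lia.
have H2 : k_sos_mod (Nat.max k (Psi k)) I (fun x => l x + - l p / 2).
  exists (gs ++ gs'). split.
  + move=> g Hg. case: (in_app_or _ _ _ Hg) => Hg'.
    * apply: deg_le_mono (Hgs g Hg') _. lia.
    * apply: deg_le_mono (Hgs' g Hg') _. lia.
  + apply: I_ext HI' => x. rewrite sum_sq_app. ring.
have := Hp _ H1 H2. lra.
Qed.
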